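(* Let $\theta(x,y)$ be the formula $y+x=x\to y=0$. Then $\mathcal{T}+\mathrm{IND}(\mathrm{Open}^-(\mathcal{T}))\nvdash\theta(x,x)$.
   Context: Language $\{0/0,s/1,p/1,+/2\}$; $\mathcal{T}$ has axioms (universally closed) $0\neq s(x)$, $p(0)=0$, $p(s(x))=x$, $x+0=x$, $x+s(y)=s(x+y)$. $\mathrm{Open}^-(\mathcal{T})$ is the set of quantifier-free formulas of this language having at most one free variable. $I_x\varphi=\forall\vec z(\varphi(0,\vec z)\wedge\forall x(\varphi(x,\vec z)\to\varphi(s(x),\vec z))\to\forall x\varphi(x,\vec z))$ and $\mathrm{IND}(\Gamma)=\{I_x\gamma:\gamma\in\Gamma\}$ (so here induction formulas have no parameters). *)

(* Defs.v *)
From Stdlib Require Import List.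
Import ListNotations.

Inductive term : Type :=
| Var : nat -> term
| Zero : term
| Succ : term -> term
| Pred : term -> term
| Plus : term -> term -> term.

Inductive form : Type :=
| Bot : form
| Eq : term -> term -> form
| Imp : form -> form -> form
| And : form -> form -> form
| Or : form -> form -> form
| All : form -> form
| Ex : form -> form.

Definition Neg (A : form) : form := Imp A Bot.

Fixpoint tsubst (s : nat -> term) (t : term) : term :=
  match t with
  | Var n => s n
  | Zero => Zero
  | Succ u => Succ (tsubst s u)
  | Pred u => Pred (tsubst s u)
  | Plus u v => Plus (tsubst s u) (tsubst s v)
  end.

Definition shift : nat -> term := fun n => Var (S n).

Definition up (s : nat -> term) : nat -> term :=
  fun n => match n with 0 => Var 0 | S k => tsubst shift (s k) end.

Fixpoint fsubst (s : nat -> term) (A : form) : form :=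
  match A with
  | Bot => Bot
  | Eq t u => Eq (tsubst s t) (tsubst s u)
  | Imp A B => Imp (fsubst s A) (fsubst s B)
  | And A B => And (fsubst s A) (fsubst s B)
  | Or A B => Or (fsubst s A) (fsubst s B)
  | All A => All (fsubst (up s) A)
  | Ex A => Ex (fsubst (up s) A)
  end.

Definition inst (t : term) : nat -> term :=
  fun n => match n with 0 => t | S k => Var k end.

Inductive prv : list form -> form -> Prop :=
| P_ctx G A : In A G -> prv G A
| P_impI G A B : prv (A :: G) B -> prv G (Imp A B)
| P_impE G A B : prv G (Imp A B) -> prv G A -> prv G B
| P_botE G A : prv G Bot -> prv G A
| P_dn G A : prv G (Neg (Neg A)) -> prv G A
| P_andI G A B : prv G A -> prv G B -> prv G (And A B)
| P_andE1 G A B : prv G (And A B) -> prv G A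
| P_andE2 G A B : prv G (And A B) -> prv G B
| P_orI1 G A B : prv G A -> prv G (Or A B)
| P_orI2 G A B : prv G B -> prv G (Or A B)
| P_orE G A B C : prv G (Or A B) -> prv (A :: G) C -> prv (B :: G) C -> prv G C
| P_allI G A : prv (map (fsubst shift) G) A -> prv G (All A)
| P_allE G A t : prv G (All A) -> prv G (fsubst (inst t) A)
| P_exI G A t : prv G (fsubst (inst t) A) -> prv G (Ex A)
| P_exE G A B : prv G (Ex A) -> prv (A :: map (fsubst shift) G) (fsubst shift B) -> prv G B
| P_refl G t : prv G (Eq t t)
| P_leib G A s t : prv G (Eq s t) -> prv G (fsubst (inst s) A) -> prv G (fsubst (inst t) A).

Definition provable (Th : form -> Prop) (A : form) : Prop :=
  exists G : list form, (forall B, In B G -> Th B) /\ prv G A.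

Definition v0 := Var 0.
Definition v1 := Var 1.
Inductive T_ax : form -> Prop :=
| T1 : T_ax (All (Neg (Eq Zero (Succ v0))))
| T2 : T_ax (Eq (Pred Zero) Zero)
| T3 : T_ax (All (Eq (Pred (Succ v0)) v0))
| T4 : T_ax (All (Eq (Plus v0 Zero) v0))
| T5 : T_ax (All (All (Eq (Plus v1 (Succ v0)) (Succ (Plus v1 v0))))).

Fixpoint qf (A : form) : Prop :=
  match A with
  | Bot | Eq _ _ => True
  | Imp A B | And A B | Or A B => qf A /\ qf B
  | All _ | Ex _ => False
  end.

Fixpoint tbound (n : nat) (t : term) : Prop :=
  match t with
  | Var k => k < n
  | Zero => True
  | Succ u | Pred u => tbound n u
  | Plus u v => tbound n u /\ tbound n v
  end.
Fixpoint fbound (n : nat) (A : form) : Prop :=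
  match A with
  | Bot => True
  | Eq t u => tbound n t /\ tbound n u
  | Imp A B | And A B | Or A B => fbound n A /\ fbound n B
  | All A | Ex A => fbound (S n) A
  end.

(* Open^-(T): quantifier-free formulas with at most one free variable (x = Var 0) *)
Definition OpenMinus (A : form) : Prop := qf A /\ fbound 1 A.

(* I_x phi = phi(0) /\ forall x (phi(x) -> phi(s x)) -> forall x phi(x) *)
Definition succ0 : nat -> term :=
  fun n => match n with 0 => Succ (Var 0) | S k => Var (S k) end.
Definition Ind (A : form) : form :=
  Imp (And (fsubst (inst Zero) A) (All (Imp A (fsubst succ0 A)))) (All A).

Definition IND_OpenMinus (B : form) : Prop := exists A, OpenMinus A /\ B = Ind A.

Definition T_IOpen (B : form) : Prop := T_ax B \/ IND_OpenMinus B.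

Definition theta : form := Imp (Eq (Plus v1 v0) v0) (Eq v1 Zero).
Definition theta_xx : form := fsubst (fun n => Var 0) theta.

(* Main.v *)
Require Import Defs.
From Stdlib Require Import List ZArith Lia Classical.
Import ListNotations.
Open Scope Z_scope.

Inductive M := Nat (n : nat) | Int (z : Z).

Definition msucc (x : M) : M := match x with Nat n => Nat (S n) | Int i => Int (i + 1) end.
Definition mpred (x : M) : M := match x with Nat n => Nat (Nat.pred n) | Int i => Int (i - 1) end.
Definition mplus (x y : M) : M :=
  match x, y with
  | Nat a, Nat b => Nat (a + b)
  | Nat a, Int i => Int (Z.of_nat a + i)
  | Int j, Nat b => Int (j + Z.of_nat b)
  | Int j, Int i => Int (j + i)
  end.

Fixpoint ev (t : term) (r : nat -> M) : M :=
  match t with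
  | Var n => r n
  | Zero => Nat 0
  | Succ u => msucc (ev u r)
  | Pred u => mpred (ev u r)
  | Plus u v => mplus (ev u r) (ev v r)
  end.

Definition scons (x : M) (r : nat -> M) : nat -> M :=
  fun n => match n with O => x | S k => r k end.

Fixpoint evF (A : form) (r : nat -> M) : Prop :=
  match A with
  | Bot => False
  | Eq t u => ev t r = ev u r
  | Imp A B => evF A r -> evF B r
  | And A B => evF A r /\ evF B r
  | Or A B => evF A r \/ evF B r
  | All A => forall x, evF A (scons x r)
  | Ex A => exists x, evF A (scons x r)
  end.

Lemma ev_ext t r r' : (forall n, r n = r' n) -> ev t r = ev t r'.
Proof. intros H; induction t; simpl; congruence. Qed.

Lemma evF_ext A : forall r r', (forall n, r n = r' n) -> (evF A r <-> evF A r').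
Proof.
  induction A; intros r r' H; simpl.
  - tauto.
  - rewrite (ev_ext t r r' H), (ev_ext t0 r r' H); tauto.
  - rewrite (IHA1 r r' H), (IHA2 r r' H); tauto.
  - rewrite (IHA1 r r' H), (IHA2 r r' H); tauto.
  - rewrite (IHA1 r r' H), (IHA2 r r' H); tauto.
  - split; intros H1 x; eapply IHA; [| apply H1 | | apply H1]; intros [|n]; simpl; auto.
  - split; intros [x H1]; exists x; eapply IHA; [| apply H1 | | apply H1]; intros [|n]; simpl; auto.
Qed.

Lemma ev_subst t s r : ev (tsubst s t) r = ev t (fun n => ev (s n) r).
Proof. induction t; simpl; congruence. Qed.

Lemma evF_subst A : forall s r, evF (fsubst s A) r <-> evF A (fun n => ev (s n) r).
Proof.
  induction A; intros s r; simpl.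
  - tauto.
  - rewrite !ev_subst; tauto.
  - rewrite IHA1, IHA2; tauto.
  - rewrite IHA1, IHA2; tauto.
  - rewrite IHA1, IHA2; tauto.
  - split; intros H1 x; specialize (H1 x); rewrite IHA in *;
      (eapply evF_ext; [|apply H1]); intros [|n]; simpl; auto;
      unfold up; rewrite ev_subst; try symmetry; apply ev_ext; intros; reflexivity.
  - split; intros [x H1]; exists x; rewrite IHA in *;
      (eapply evF_ext; [|apply H1]); intros [|n]; simpl; auto;
      unfold up; rewrite ev_subst; try symmetry; apply ev_ext; intros; reflexivity.
Qed.


Lemma inst_env t r : forall n, ev (inst t n) r = scons (ev t r) r n.
Proof. intros [|n]; reflexivity. Qed.

Lemma soundness G A : prv G A -> forall r, (forall B, In B G -> evF B r) -> evF A r.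
Proof.
  induction 1; intros r HG; simpl in *.
  - auto.
  - intros HA; apply IHprv; intros D0 [<-|HC]; auto.
  - apply IHprv1; auto.
  - destruct (IHprv r HG).
  - apply NNPP; intro Hn; apply (IHprv r HG); exact Hn.
  - auto.
  - apply (IHprv r HG).
  - apply (IHprv r HG).
  - auto.
  - auto.
  - destruct (IHprv1 r HG) as [HA|HB].
    + apply IHprv2; intros D0 [<-|HC]; auto.
    + apply IHprv3; intros D0 [<-|HC]; auto.
  - intros x; apply IHprv; intros C HC.
    apply in_map_iff in HC as [D [<- HD]].
    rewrite evF_subst. eapply evF_ext; [|apply HG, HD]. intros; reflexivity.
  - rewrite evF_subst. eapply evF_ext; [|apply (IHprv r HG (ev t r))].
    intros [|n]; reflexivity.
  - exists (ev t r). specialize (IHprv r HG). rewrite evF_subst in IHprv.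
    eapply evF_ext; [|apply IHprv]. intros [|n]; reflexivity.
  - destruct (IHprv1 r HG) as [x Hx].
    assert (H2 : evF (fsubst Defs.shift B) (scons x r)).
    { apply IHprv2. intros D0 [<-|HC]; auto.
      apply in_map_iff in HC as [D [<- HD]].
      rewrite evF_subst. eapply evF_ext; [|apply HG, HD]. intros; reflexivity. }
    rewrite evF_subst in H2. eapply evF_ext; [|apply H2]. intros; reflexivity.
  - reflexivity.
  - specialize (IHprv1 r HG). specialize (IHprv2 r HG).
    rewrite evF_subst in *. eapply evF_ext; [|apply IHprv2].
    intros [|n]; simpl; auto.
Qed.

Definition cst (x : M) : nat -> M := fun _ => x.

Definition lin (t : term) : Prop :=
  (exists k, forall x, ev t (cst x) = Nat k) \/
  (exists c d N0, 1 <= c /\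
     (forall n, (N0 <= n)%nat -> exists m, ev t (cst (Nat n)) = Nat m /\
                  Z.of_nat m = c * Z.of_nat n + d) /\
     (forall i, ev t (cst (Int i)) = Int (c * i + d))).

Lemma lin_all t : lin t.
Proof.
  induction t.
  - right. exists 1, 0, 0%nat. split; [lia|split].
    + intros m _. exists m. split; [reflexivity|lia].
    + intros i. cbn [ev]. unfold cst. f_equal. lia.
  - left. exists 0%nat. reflexivity.
  - destruct IHt as [[k Hk]|[c [d [N [Hc [HN HI]]]]]].
    + left. exists (S k). intros x. cbn [ev msucc mpred mplus]. rewrite Hk. reflexivity.
    + right. exists c, (d+1), N. split; [lia|split].
      * intros n Hn. destruct (HN n Hn) as [m [Hm Hm']]. exists (S m).
        cbn [ev msucc mpred mplus]. rewrite Hm. split; [reflexivity|lia].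
      * intros i. cbn [ev msucc mpred mplus]. rewrite HI. cbn [ev msucc mpred mplus]. f_equal. lia.
  - destruct IHt as [[k Hk]|[c [d [N [Hc [HN HI]]]]]].
    + left. exists (Nat.pred k). intros x. cbn [ev msucc mpred mplus]. rewrite Hk. reflexivity.
    + right. exists c, (d-1), (Nat.max N (Z.to_nat (Z.abs d) + 1)). split; [lia|split].
      * intros n Hn. destruct (HN n ltac:(lia)) as [m [Hm Hm']]. exists (Nat.pred m).
        cbn [ev msucc mpred mplus]. rewrite Hm. split; [reflexivity|].
        assert (c * Z.of_nat n >= Z.of_nat n) by nia. lia.
      * intros i. cbn [ev msucc mpred mplus]. rewrite HI. cbn [ev msucc mpred mplus]. f_equal. lia.
  - destruct IHt1 as [[k Hk]|[c [d [N [Hc [HN HI]]]]]];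
    destruct IHt2 as [[k2 Hk2]|[c2 [d2 [N2 [Hc2 [HN2 HI2]]]]]].
    + left. exists (k+k2)%nat. intros x. cbn [ev msucc mpred mplus]. rewrite Hk, Hk2. reflexivity.
    + right. exists c2, (d2 + Z.of_nat k), N2. split; [lia|split].
      * intros n Hn. destruct (HN2 n Hn) as [m [Hm Hm']]. exists (k+m)%nat.
        cbn [ev msucc mpred mplus]. rewrite Hk, Hm. split; [reflexivity|lia].
      * intros i. cbn [ev msucc mpred mplus]. rewrite Hk, HI2. cbn [ev msucc mpred mplus]. f_equal. lia.
    + right. exists c, (d + Z.of_nat k2), N. split; [lia|split].
      * intros n Hn. destruct (HN n Hn) as [m [Hm Hm']]. exists (m+k2)%nat.
        cbn [ev msucc mpred mplus]. rewrite Hk2, Hm. split; [reflexivity|lia].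
      * intros i. cbn [ev msucc mpred mplus]. rewrite Hk2, HI. cbn [ev msucc mpred mplus]. f_equal. lia.
    + right. exists (c+c2), (d + d2), (Nat.max N N2). split; [lia|split].
      * intros n Hn. destruct (HN n ltac:(lia)) as [m [Hm Hm']].
        destruct (HN2 n ltac:(lia)) as [m2 [Hm2 Hm2']]. exists (m+m2)%nat.
        cbn [ev msucc mpred mplus]. rewrite Hm, Hm2. split; [reflexivity|lia].
      * intros i. cbn [ev msucc mpred mplus]. rewrite HI, HI2. cbn [ev msucc mpred mplus]. f_equal. lia.
Qed.

Definition fcl (A : form) : Prop :=
  exists (b : Prop) N0 B, 0 <= B /\
    (forall n, (N0 <= n)%nat -> (evF A (cst (Nat n)) <-> b)) /\
    (forall i, i <= - B -> (evF A (cst (Int i)) <-> b)).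

Lemma nat_inj a b : Nat a = Nat b <-> a = b.
Proof. split; [intros H; inversion H; auto|intros ->; auto]. Qed.
Lemma int_inj a b : Int a = Int b <-> a = b.
Proof. split; [intros H; inversion H; auto|intros ->; auto]. Qed.

Lemma fcl_eq_cl_lin k t t' (Hk : forall x, ev t (cst x) = Nat k)
  c d N (Hc : 1 <= c)
  (HN : forall n, (N <= n)%nat -> exists m, ev t' (cst (Nat n)) = Nat m /\
                  Z.of_nat m = c * Z.of_nat n + d)
  (HI : forall i, ev t' (cst (Int i)) = Int (c * i + d)) :
  fcl (Eq t t') /\ fcl (Eq t' t).
Proof.
  split; exists False, (Nat.max N (k + Z.to_nat (Z.abs d) + 1)), 0; (split; [lia|split]).
  all: try (intros i _; simpl; rewrite Hk, HI; split; [discriminate|tauto]).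
  all: intros n Hn; destruct (HN n ltac:(lia)) as [m [Hm Hm']]; simpl; rewrite Hk, Hm;
       split; [|tauto]; rewrite nat_inj; intros E; subst;
       assert (c * Z.of_nat n >= Z.of_nat n) by nia; lia.
Qed.

Lemma fcl_qf A : qf A -> fcl A.
Proof.
  induction A; cbn [evF]; intros Hq.
  - exists False, 0%nat, 0. split; [lia|split]; intros; cbn [evF]; tauto.
  - destruct (lin_all t) as [[k Hk]|[c [d [N [Hc [HN HI]]]]]];
    destruct (lin_all t0) as [[k2 Hk2]|[c2 [d2 [N2 [Hc2 [HN2 HI2]]]]]].
    + exists (k = k2), 0%nat, 0. split; [lia|split]; intros; cbn [evF]; rewrite Hk, Hk2; apply nat_inj.
    + exact (proj1 (fcl_eq_cl_lin k t t0 Hk c2 d2 N2 Hc2 HN2 HI2)).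
    + exact (proj2 (fcl_eq_cl_lin k2 t0 t Hk2 c d N Hc HN HI)).
    + destruct (Z.eq_dec c c2) as [<-|Hne].
      * exists (d = d2), (Nat.max N N2), 0. split; [lia|split].
        -- intros n Hn. destruct (HN n ltac:(lia)) as [m [Hm Hm']].
           destruct (HN2 n ltac:(lia)) as [m2 [Hm2 Hm2']]. cbn [evF]. rewrite Hm, Hm2, nat_inj.
           lia.
        -- intros i _. cbn [evF]. rewrite HI, HI2, int_inj. lia.
      * exists False, (Nat.max (Nat.max N N2) (Z.to_nat (Z.abs (d - d2)) + 1)),
          (Z.abs (d - d2) + 1). split; [lia|split].
        -- intros n Hn. destruct (HN n ltac:(lia)) as [m [Hm Hm']].
           destruct (HN2 n ltac:(lia)) as [m2 [Hm2 Hm2']]. cbn [evF]. rewrite Hm, Hm2, nat_inj.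
           split; [|tauto]. intros E; subst.
           destruct (Z.lt_total c c2) as [Hl|[Hl|Hl]]; [|lia|].
           ++ assert ((c2 - c) * Z.of_nat n >= Z.of_nat n) by nia. lia.
           ++ assert ((c - c2) * Z.of_nat n >= Z.of_nat n) by nia. lia.
        -- intros i Hi. cbn [evF]. rewrite HI, HI2, int_inj. split; [|tauto]. intros E.
           destruct (Z.lt_total c c2) as [Hl|[Hl|Hl]]; [|lia|].
           ++ assert ((c2 - c) * i <= i) by nia. lia.
           ++ assert ((c - c2) * i <= i) by nia. lia.
  - destruct Hq as [H1 H2]. destruct (IHA1 H1) as [b1 [N1 [B1 [HB1 [P1 Q1]]]]].
    destruct (IHA2 H2) as [b2 [N2 [B2 [HB2 [P2 Q2]]]]].
    exists (b1 -> b2), (Nat.max N1 N2), (Z.max B1 B2). split; [lia|split].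
    + intros n Hn; cbn [evF]; rewrite P1, P2 by lia; tauto.
    + intros n Hn; cbn [evF]; rewrite Q1, Q2 by lia; tauto.
  - destruct Hq as [H1 H2]. destruct (IHA1 H1) as [b1 [N1 [B1 [HB1 [P1 Q1]]]]].
    destruct (IHA2 H2) as [b2 [N2 [B2 [HB2 [P2 Q2]]]]].
    exists (b1 /\ b2), (Nat.max N1 N2), (Z.max B1 B2). split; [lia|split].
    + intros n Hn; cbn [evF]; rewrite P1, P2 by lia; tauto.
    + intros n Hn; cbn [evF]; rewrite Q1, Q2 by lia; tauto.
  - destruct Hq as [H1 H2]. destruct (IHA1 H1) as [b1 [N1 [B1 [HB1 [P1 Q1]]]]].
    destruct (IHA2 H2) as [b2 [N2 [B2 [HB2 [P2 Q2]]]]].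
    exists (b1 \/ b2), (Nat.max N1 N2), (Z.max B1 B2). split; [lia|split].
    + intros n Hn; cbn [evF]; rewrite P1, P2 by lia; tauto.
    + intros n Hn; cbn [evF]; rewrite Q1, Q2 by lia; tauto.
  - contradiction.
  - contradiction.
Qed.

Lemma tb_ext n t r r' : tbound n t -> (forall k, (k < n)%nat -> r k = r' k) -> ev t r = ev t r'.
Proof. intros Hb H; induction t; simpl in *.
  - auto.
  - reflexivity.
  - rewrite IHt; auto.
  - rewrite IHt; auto.
  - destruct Hb; rewrite IHt1, IHt2; auto.
Qed.

Lemma fb_ext n A r r' : qf A -> fbound n A -> (forall k, (k < n)%nat -> r k = r' k) ->
  (evF A r <-> evF A r').
Proof.
  intros Hq Hb H; induction A; simpl in *; try contradiction.
  - tauto.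
  - rewrite (tb_ext n t r r'), (tb_ext n t0 r r'); tauto.
  - rewrite IHA1, IHA2; tauto.
  - rewrite IHA1, IHA2; tauto.
  - rewrite IHA1, IHA2; tauto.
Qed.

Lemma Ind_sound A r : OpenMinus A -> evF (Ind A) r.
Proof.
  intros [Hq Hb]. unfold Ind. cbn [evF]. intros [H0 HS] x.
  set (P := fun x => evF A (cst x)).
  assert (EP : forall x r, evF A (scons x r) <-> P x).
  { intros y r0. apply (fb_ext 1); auto. intros [|k] Hk; [reflexivity|lia]. }
  rewrite EP.
  assert (P0 : P (Nat 0)).
  { rewrite evF_subst in H0. unfold P. apply (fb_ext 1 A _ (cst (Nat 0)) Hq Hb) in H0; [exact H0|].
    intros [|k] Hk; [reflexivity|lia]. }
  assert (PS : forall x, P x -> P (msucc x)).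
  { intros y Hy. specialize (HS y). cbn [evF] in HS. rewrite EP in HS.
    specialize (HS Hy). rewrite evF_subst in HS. unfold P.
    apply (fb_ext 1 A _ (cst (msucc y)) Hq Hb) in HS; [exact HS|]. intros [|k] Hk; [reflexivity|lia]. }
  assert (PN : forall n, P (Nat n)).
  { induction n; auto. apply (PS (Nat n)); auto. }
  destruct (fcl_qf A Hq) as [b [N0 [B [HB [Hn Hi]]]]].
  assert (Hbt : b) by (apply (Hn N0); [lia| apply PN]).
  destruct x as [n|j]; auto.
  set (i0 := Z.min j (-B)).
  assert (Hk : forall k : nat, P (Int (i0 + Z.of_nat k))).
  { induction k.
    - rewrite Z.add_0_r. apply Hi; [unfold i0; lia|auto].
    - replace (i0 + Z.of_nat (S k)) with ((i0 + Z.of_nat k) + 1) by lia.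
      apply (PS (Int _)); auto. }
  specialize (Hk (Z.to_nat (j - i0))).
  replace (i0 + Z.of_nat (Z.to_nat (j - i0))) with j in Hk by (unfold i0; lia). exact Hk.
Qed.

Lemma T_sound A r : T_ax A -> evF A r.
Proof.
  intros H; destruct H; cbn [evF ev scons v0 v1].
  - intros [n|i]; simpl; discriminate.
  - reflexivity.
  - intros [n|i]; simpl; f_equal; lia.
  - intros [n|i]; simpl; f_equal; lia.
  - intros [n|i] [m|j]; simpl; f_equal; lia.
Qed.

Theorem lemma10 : ~ provable T_IOpen theta_xx.
Proof.
  intros [G [HG Hp]].
  assert (H := soundness G theta_xx Hp (cst (Int 0))).
  assert (Hc : evF theta_xx (cst (Int 0))).
  { apply H. intros B HB. destruct (HG B HB) as [HT|[A [HA ->]]].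
    - apply T_sound; auto.
    - apply Ind_sound; auto. }
  simpl in Hc. discriminate Hc. reflexivity.
Qed.
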